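(* Let $P\in O(V,K)$, $p,x\in V$ and $X\in\mathfrak{o}(V,K)$, and let $P^\vee$ be the $(n+3)\times(n+3)$ matrix $\begin{pmatrix}1&p^*\\0&P\end{pmatrix}$. Then for every $Y\in\mathfrak{o}(V,K)$ and every $y\in V$, $$\big\langle \big(PXP^{-1}+L_{Pp,Px},\,(Px)^*\big)\,\big|\,(Y,y^* )\big\rangle=\big\langle (X,x^* )\,\big|\,(P^\vee)^{-1}(Y,y^* )P^\vee\big\rangle .$$ In other words, if $\widetilde{\mathrm{Ad}}_{P^\vee}$ denotes the linear map of $\mathfrak g^\vee$ defined by $(\widetilde{\mathrm{Ad}}_{P^\vee}a)^\sharp=\mathrm{Ad}^T_{(P^\vee)^{-1}}(a^\sharp)$ for all $a\in\mathfrak g^\vee$ (where $\mathrm{Ad}^T_{g}(\mu)=\mu\circ\mathrm{Ad}_g$ and $\mathrm{Ad}_g b=gbg^{-1}$), then $\widetilde{\mathrm{Ad}}_{(P,p^* )}(X,x^* )=\big(PXP^{-1}+L_{Pp,Px},(Px)^*\big)$.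
   Context: Let $n\ge 0$ be an integer and let $\widetilde K$ be a real symmetric $n\times n$ matrix with $\widetilde K^2=I_n$. Let $V=\mathbb R^{n+2}$ with standard basis $e_1,\dots,e_{n+2}$, and let $K=\begin{pmatrix}0&0&1\\0&\widetilde K&0\\1&0&0\end{pmatrix}$ (block sizes $1,n,1$). For $x,w\in V$ write $x^*=x^TK$ (a row vector) and $L_{u,w}=u\,w^*-w\,u^*$ (an $(n+2)\times(n+2)$ matrix). Let $O(V,K)=\{P: P^TKP=K\}$ and $\mathfrak{o}(V,K)=\{X: X^TK+KX=0\}$. Let $\mathfrak g^\vee$ be the Lie algebra of $(n+3)\times(n+3)$ matrices $\begin{pmatrix}0&x^*\\0&X\end{pmatrix}$ with $X\in\mathfrak o(V,K)$, $x\in V$ (the first row/column indexed by an extra basis vector $e_0$); such a matrix is denoted $(X,x^* )$. On $\mathfrak g^\vee$ define the nondegenerate bilinear form $\langle (X,x^* )\,|\,(\overline X,\overline x^{\,*})\rangle=\tfrac12\mathrm{tr}(X\overline X)+\overline x^{\,T}Kx$, and for $a\in\mathfrak g^\vee$ let $a^\sharp$ be the linear functional $b\mapsto\langle a|b\rangle$. Products such as $(P^\vee)^{-1}(Y,y^* )P^\vee$ are matrix products; the result lies again in $\mathfrak g^\vee$. *)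

(* Defs.v *)
From HB Require Import structures.
From mathcomp Require Import all_boot all_order all_algebra.
Set Implicit Arguments. Unset Strict Implicit. Unset Printing Implicit Defensive.
Import Order.TTheory GRing.Theory Num.Theory.
Local Open Scope ring_scope.

(* V = R^(n+2), indexed as 'I_(1 + n + 1) (block sizes 1, n, 1). *)
Notation dimV n := (1 + n + 1)%N.

(* K = [[0,0,1],[0,Kt,0],[1,0,0]] *)
Definition Kmat (R : realFieldType) (n : nat) (Kt : 'M[R]_n) : 'M[R]_(dimV n) :=
  block_mx (block_mx (0 : 'M_1) 0 0 Kt) (col_mx (1 : 'M_1) 0)
           (row_mx (1 : 'M_1) 0) (0 : 'M_1).

Definition star (R : realFieldType) (n : nat) (Kt : 'M[R]_n) (x : 'cV[R]_(dimV n))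
  : 'rV[R]_(dimV n) := x^T *m Kmat Kt.

Definition Lmat (R : realFieldType) (n : nat) (Kt : 'M[R]_n) (u w : 'cV[R]_(dimV n))
  : 'M[R]_(dimV n) := u *m star Kt w - w *m star Kt u.

Definition in_O (R : realFieldType) (n : nat) (Kt : 'M[R]_n) (P : 'M[R]_(dimV n)) :=
  P^T *m Kmat Kt *m P = Kmat Kt.

Definition in_o (R : realFieldType) (n : nat) (Kt : 'M[R]_n) (X : 'M[R]_(dimV n)) :=
  X^T *m Kmat Kt + Kmat Kt *m X = 0.

(* the element (X, star x) of g^vee, an (n+3)x(n+3) matrix, first index e_0 *)
Definition gv (R : realFieldType) (n : nat) (Kt : 'M[R]_n)
  (X : 'M[R]_(dimV n)) (x : 'cV[R]_(dimV n)) : 'M[R]_(1 + dimV n) :=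
  block_mx (0 : 'M_1) (star Kt x) 0 X.

Definition gv_form (R : realFieldType) (n : nat) (Kt : 'M[R]_n)
  (X : 'M[R]_(dimV n)) (x : 'cV[R]_(dimV n))
  (Xb : 'M[R]_(dimV n)) (xb : 'cV[R]_(dimV n)) : R :=
  2^-1 * \tr (X *m Xb) + (xb^T *m Kmat Kt *m x) 0 0.

Definition Pvee (R : realFieldType) (n : nat) (Kt : 'M[R]_n)
  (P : 'M[R]_(dimV n)) (p : 'cV[R]_(dimV n)) : 'M[R]_(1 + dimV n) :=
  block_mx (1 : 'M_1) (star Kt p) 0 P.

(* Main.v *)
Require Import Defs.
From HB Require Import structures.
From mathcomp Require Import all_boot all_order all_algebra.
Import Order.TTheory GRing.Theory Num.Theory.
Local Open Scope ring_scope.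

Section S.
Variables (R : realFieldType) (n : nat) (Kt : 'M[R]_n).
Hypotheses (HKt_sym : Kt^T = Kt) (HKt_inv : Kt *m Kt = 1%:M).

Lemma KT : (Kmat Kt)^T = Kmat Kt.
Proof.
by rewrite /Kmat tr_block_mx tr_block_mx tr_row_mx tr_col_mx !trmx0 !trmx1 HKt_sym.
Qed.

Lemma KK : Kmat Kt *m Kmat Kt = 1%:M.
Proof.
rewrite /Kmat mulmx_block mulmx_block mul_col_row mul_block_col mul_row_block mul_row_col.
rewrite !mulmx0 !mul0mx !mulmx1 !add0r !addr0 HKt_inv add_block_mx !addr0 !add0r.
by rewrite row_mx0 col_mx0 -!scalar_mx_block.
Qed.

Lemma tr11 (M : 'M[R]_1) : \tr M = M 0 0.
Proof. by rewrite /mxtrace big_ord1. Qed.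

Lemma trE (M : 'M[R]_1) : M^T 0 0 = M 0 0.
Proof. by rewrite mxE. Qed.

Lemma skew (Y : 'M[R]_(dimV n)) (u w : 'cV[R]_(dimV n)) : in_o Kt Y ->
  (u^T *m Kmat Kt *m Y *m w) 0 0 = - (w^T *m Kmat Kt *m Y *m u) 0 0.
Proof.
move=> HY.
rewrite -[LHS]trE.
rewrite !trmx_mul trmxK KT -!mulmxA (mulmxA Y^T) .
have -> : Y^T *m Kmat Kt = - (Kmat Kt *m Y) by apply/eqP; rewrite -addr_eq0; apply/eqP; exact: HY.
by rewrite mulNmx mulmxN mxE !mulmxA.
Qed.
Lemma subE (A B : 'M[R]_1) : (A - B) 0 0 = A 0 0 - B 0 0.
Proof. by rewrite !mxE. Qed.

Lemma trL (K Y : 'M[R]_(dimV n)) (u w : 'cV[R]_(dimV n)) :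
  \tr (u *m (w^T *m K) *m Y) = (w^T *m K *m Y *m u) 0 0.
Proof. by rewrite -mulmxA mxtrace_mulC tr11 ?mulmxA. Qed.
End S.

Theorem lemma3 (R : realFieldType) (n : nat) (Kt : 'M[R]_n)
  (HKt_sym : Kt^T = Kt) (HKt_inv : Kt *m Kt = 1%:M)
  (P : 'M[R]_(dimV n)) (p x : 'cV[R]_(dimV n)) (X : 'M[R]_(dimV n))
  (HP : in_O Kt P) (HX : in_o Kt X) :
  forall (Y : 'M[R]_(dimV n)) (y : 'cV[R]_(dimV n)), in_o Kt Y ->
    exists (Z : 'M[R]_(dimV n)) (z : 'cV[R]_(dimV n)),
      [/\ in_o Kt Z,
          invmx (Pvee Kt P p) *m gv Kt Y y *m Pvee Kt P p = gv Kt Z z &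
          gv_form Kt (P *m X *m invmx P + Lmat Kt (P *m p) (P *m x)) (P *m x) Y y
          = gv_form Kt X x Z z].
Proof.
move=> Y y HY.
have KT' := @KT R n Kt HKt_sym; have KK' := @KK R n Kt HKt_inv.
move: HP; rewrite /in_O => HP.
set K := Kmat Kt in KT' KK' HP *.
set Pi := K *m P^T *m K.
have PiL : Pi *m P = 1%:M by rewrite /Pi -!mulmxA (mulmxA P^T) HP.
have Pu : P \in unitmx := (mulmx1_unit PiL).2.
have PiE : invmx P = Pi by rewrite -[RHS]mulmx1 -(mulmxV Pu) mulmxA PiL mul1mx.
have PPi : P *m Pi = 1%:M := mulmx1C PiL.
set Q := block_mx (1%:M : 'M_1) (- (star Kt p *m Pi)) 0 Pi.
have PvQ : Pvee Kt P p *m Q = 1%:M.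
  rewrite /Pvee /Q mulmx_block !mulmx0 !mul0mx !mul1mx PPi.
  by rewrite !addr0 !add0r addNr -scalar_mx_block.
have Pvu := (mulmx1_unit PvQ).1.
have InvE : invmx (Pvee Kt P p) = Q.
  by rewrite -[invmx _]mulmx1 -PvQ mulmxA mulVmx // mul1mx.
set r := star Kt y *m P - star Kt p *m Pi *m Y *m P.
have PiTK : Pi^T *m K = K *m P.
  by rewrite /Pi !trmx_mul trmxK KT' -!mulmxA KK' mulmx1.
have KPi : K *m Pi = P^T *m K.
  by rewrite /Pi !mulmxA KK' mul1mx.
exists (Pi *m Y *m P), (K *m r^T); split.
- rewrite /in_o.
  have -> : (Pi *m Y *m P)^T *m K + K *m (Pi *m Y *m P) = P^T *m (Y^T *m K + K *m Y) *m P.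
    by rewrite mulmxDr mulmxDl !trmx_mul -!mulmxA trmxK KT' KK' mulmx1 (mulmxA K K) KK' mul1mx.
  by rewrite HY mulmx0 mul0mx.
- rewrite InvE /Q /gv /Pvee !mulmx_block !mulmx0 !mul0mx !addr0 !add0r mul1mx.
  have -> : star Kt (K *m r^T) = r by rewrite /star trmx_mul trmxK KT' -mulmxA KK' mulmx1.
  by rewrite /r !mul0mx !add0r mulNmx mulmxBl !mulmxA.
- rewrite /gv_form /Lmat /star PiE -/K.
  have -> : (K *m r^T)^T *m K = r by rewrite trmx_mul trmxK KT' -mulmxA KK' mulmx1.
  set a := ((P *m x)^T *m K *m Y *m (P *m p)) 0 0.
  have E1 : \tr ((P *m X *m Pi + (P *m p *m ((P *m x)^T *m K) - P *m x *m ((P *m p)^T *m K))) *m Y)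
     = \tr (X *m (Pi *m Y *m P)) + 2 * a.
    rewrite mulmxDl mxtraceD mulmxBl raddfB /= !trL (@skew R n Kt HKt_sym Y (P *m p) (P *m x) HY) -/a.
    rewrite opprK [2 * a]mulr_natl mulr2n; congr (_ + _).
    by rewrite -!mulmxA mxtrace_mulC !mulmxA.
  have E2 : (r *m x) 0 0 = (y^T *m K *m (P *m x)) 0 0 + a.
    rewrite /r mulmxBl subE /star -/K; congr (_ + _); first by rewrite !mulmxA.
    rewrite /Pi.
    have -> : p^T *m K *m (K *m P^T *m K) *m Y *m P *m x = (P *m p)^T *m K *m Y *m (P *m x).
      by rewrite trmx_mul -!mulmxA (mulmxA K K) KK' mul1mx.
    by rewrite (@skew R n Kt HKt_sym Y (P *m p) (P *m x) HY) opprK.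
  by rewrite E1 E2 mulrDr mulrA mulVf ?pnatr_eq0 // mul1r -addrA (addrC a).
Qed.
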